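(* Let $F$ be a 3SAT(3) formula satisfying the standing assumptions below, with variables $x_1,\dots,x_p$ and clauses $c_1,\dots,c_q$, and let $(G_s,L)$ be the temporal star constructed from $F$ as described below. Then there exists a (partial) exploration $J$ of $(G_s,L)$ of maximum size which explores all the edges $e_i,e_i',e_i''$ for $i=1,2,\dots,p$.
   Context: A temporal star $(G_s,L)$ consists of a star $G_s$ with center $c$ and a map $L$ assigning to each edge a finite set of positive integer labels (times at which the edge is available). A journey is a sequence of time edges $(u,u_1,l_1),(u_1,u_2,l_2),\dots$ (each $l_t$ a label of the edge traversed) with strictly increasing labels $l_1<l_2<\cdots$. A (partial) exploration is a journey starting and ending at $c$; an edge $\{c,v\}$ is explored if the journey enters it from $c$ to $v$ at some label and later exits it from $v$ to $c$ at a strictly larger label; the size of an exploration is the number of edges (equivalently leaves) it explores. 3SAT(3): a CNF formula with variables $x_1,\dots,x_p$ and clauses $c_1,\dots,c_q$, each clause having at most $3$ literals and each variable appearing in at most $3$ clauses. Standing assumptions on $F$: every variable occurs at least once unnegated and at least once negated; if a variable occurs three times it occurs exactly once negated and twice unnegated, and if it occurs twice it occurs once negated and once unnegated. Construction of $(G_s,L)$ from $F$: the star has the following edges. For each $i=1,\dots,p$: an edge $e_i$ with labels $50i-10,\ 50i-7,\ 50i+10,\ 50i+13$; an edge $e_i'$ with labels $50i,\ 50i+1$; an edge $e_i''$ with labels $50i+15,\ 50i+16$. For each clause $c_j$, $j=1,\dots,q$, an edge $e_{p+j}$ whose labels are: for every variable $x_i$ appearing unnegated in $c_j$ such that $c_j$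 is the first clause (in the order $c_1,\dots,c_q$) containing $x_i$ unnegated, the labels $50i-12,\ 50i-9$; for every variable $x_i$ appearing unnegated in $c_j$ such that an earlier clause already contains $x_i$ unnegated, the labels $50i-8,\ 50i-5$; for every variable $x_i$ appearing negated in $c_j$, the labels $50i+8,\ 50i+11$. *)

(* Defs.v *)
From mathcomp Require Import all_boot.
Set Implicit Arguments. Unset Strict Implicit. Unset Printing Implicit Defensive.

(* A temporal star is given by a finite type V of leaves (one leaf v per *)
(* edge {c,v}) and a labelling L : V -> seq nat (the finite set of times *)
(* at which edge {c,v} is available).  Vertices of the star are          *)
(* option V, with None = the center c.                                   *)

Section TemporalStar.
Variable V : finType.
Variable L : V -> seq nat.

Definition tedge := (option V * option V * nat)%type.
Definition tsrc (t : tedge) : option V := t.1.1.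
Definition ttgt (t : tedge) : option V := t.1.2.
Definition tlab (t : tedge) : nat := t.2.

Definition tedge_ok (t : tedge) : bool :=
  match t with
  | (Some v, None, l) => l \in L v
  | (None, Some v, l) => l \in L v
  | _ => false
  end.

Definition t0 : tedge := (None, None, 0).

Definition journey (s : seq tedge) : Prop :=
  all tedge_ok s /\
  forall k, k.+1 < size s ->
    ttgt (nth t0 s k) = tsrc (nth t0 s k.+1) /\
    tlab (nth t0 s k) < tlab (nth t0 s k.+1).

Definition exploration (s : seq tedge) : Prop :=
  journey s /\
  (s <> [::] -> tsrc (head t0 s) = None /\ ttgt (last t0 s) = None).

Definition explored (s : seq tedge) (v : V) : bool :=
  [exists i : 'I_(size s), exists j : 'I_(size s),
     [&& i < j,
         tsrc (nth t0 s i) == None, ttgt (nth t0 s i) == Some v,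
         tsrc (nth t0 s j) == Some v, ttgt (nth t0 s j) == None &
         tlab (nth t0 s i) < tlab (nth t0 s j)]].

Definition expl_size (s : seq tedge) : nat := #|[set v | explored s v]|.

Definition max_exploration (s : seq tedge) : Prop :=
  exploration s /\ forall s', exploration s' -> expl_size s' <= expl_size s.

End TemporalStar.

(* 3SAT(3) formulas.  Variables are x_1..x_p (numbered by nat 1..p).  A  *)
(* literal is a pair (i, b): b = true means x_i unnegated, b = false     *)
(* means negated.  A clause is a duplicate-free list of literals; the     *)
(* formula is the list of clauses c_1..c_q (q = size F, list position     *)
(* j (0-based) is clause c_(j+1)).                                        *)

Definition literal := (nat * bool)%type.
Definition clause := seq literal.
Definition formula := seq clause.

Definition npos (F : formula) (i : nat) := count (fun c => (i, true) \in c) F.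
Definition nneg (F : formula) (i : nat) := count (fun c => (i, false) \in c) F.

Definition wf_3sat3 (p : nat) (F : formula) : Prop :=
  (forall c, c \in F -> [/\ size c <= 3, uniq c &
                            all (fun l : literal => 1 <= l.1 <= p) c]) /\
  (forall i, 1 <= i <= p ->
     let a := npos F i in let b := nneg F i in
     [/\ a + b <= 3, 1 <= a, 1 <= b,
         (a + b = 3 -> b = 1 /\ a = 2) &
         (a + b = 2 -> b = 1 /\ a = 1)]).

(* The construction.  Leaves: e_i, e_i', e_i'' (i = k+1, k : 'I_p) and   *)
(* e_(p+j) for clause c_j (j = k+1, k : 'I_q).                           *)

Definition leafT (p q : nat) : finType := ((('I_p + 'I_p) + 'I_p) + 'I_q)%type.

Definition e_ {p q} (k : 'I_p) : leafT p q := inl (inl (inl k)).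
Definition e'_ {p q} (k : 'I_p) : leafT p q := inl (inl (inr k)).
Definition e''_ {p q} (k : 'I_p) : leafT p q := inl (inr k).
Definition ec_ {p q} (k : 'I_q) : leafT p q := inr k.

Definition first_pos (F : formula) (i : nat) : nat :=
  find (fun c : clause => (i, true) \in c) F.

Definition lit_labels (F : formula) (j : nat) (l : literal) : seq nat :=
  let i := l.1 in
  if l.2 then
    (if first_pos F i == j then [:: 50 * i - 12; 50 * i - 9]
     else [:: 50 * i - 8; 50 * i - 5])
  else [:: 50 * i + 8; 50 * i + 11].

Definition clause_labels (F : formula) (j : nat) : seq nat :=
  flatten [seq lit_labels F j l | l <- nth [::] F j].

Definition star_labels (p : nat) (F : formula) (v : leafT p (size F)) : seq nat :=
  match v with
  | inl (inl (inl k)) => let i := k.+1 in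
      [:: 50 * i - 10; 50 * i - 7; 50 * i + 10; 50 * i + 13]
  | inl (inl (inr k)) => let i := k.+1 in [:: 50 * i; 50 * i + 1]
  | inl (inr k) => let i := k.+1 in [:: 50 * i + 15; 50 * i + 16]
  | inr k => clause_labels F k
  end.

(* Main.v *)
Require Import Defs.
From mathcomp Require Import all_boot.
From mathcomp Require Import zify.
From Stdlib Require Import Classical.
Set Implicit Arguments. Unset Strict Implicit. Unset Printing Implicit Defensive.


Section Gen.
Variable V : finType.
Variable L : V -> seq nat.
Local Notation t0 := (@t0 V).

Definition jr (t1 t2 : tedge V) := (ttgt t1 == tsrc t2) && (tlab t1 < tlab t2).

Lemma journeyS (s : seq (tedge V)) :
  all (tedge_ok L) s -> sorted jr s -> journey L s.
Proof.
move=> Hok Hs; split=> // k.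
case: s Hok Hs => [|x s] //= _ /(pathP t0) H Hk.
have /H/andP[/eqP -> ->] : k < size s by [].
by [].
Qed.

Definition vis := (V * nat * nat)%type.
Definition vin (x : vis) : tedge V := (None, Some x.1.1, x.1.2).
Definition vout (x : vis) : tedge V := (Some x.1.1, None, x.2).
Definition expand (vl : seq vis) : seq (tedge V) :=
  flatten [seq [:: vin x; vout x] | x <- vl].
Definition vr (x y : vis) := x.2 < y.1.2.
Definition vlab (x : vis) := (x.1.2 \in L x.1.1) && (x.2 \in L x.1.1).
Definition vlt (x : vis) := x.1.2 < x.2.

Lemma expand_cons x vl : expand (x :: vl) = vin x :: vout x :: expand vl.
Proof. by []. Qed.

Lemma path_expand x vl : all vlt vl -> path vr x vl ->
  path jr (vout x) (expand vl).
Proof.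
elim: vl x => [|y vl IH] x //= /andP[Hy Hall] /andP[Hxy Hp].
rewrite /jr /=; move: Hxy Hy; rewrite /vr /vlt => -> -> /=; rewrite !eqxx /=; exact: IH.
Qed.

Lemma last_expand x vl : ttgt (last (vout x) (expand vl)) = None.
Proof. by elim: vl x => [|y vl IH] x //=. Qed.

Lemma all_ok_expand vl : all vlab vl -> all (tedge_ok L) (expand vl).
Proof.
elim: vl => [|x vl IH] //= /andP[/andP[H1 H2] H].
by rewrite /= H1 H2 IH.
Qed.

Lemma expand_expl vl : all vlab vl -> all vlt vl -> sorted vr vl ->
  exploration L (expand vl).
Proof.
move=> Hl Ht Hs; split.
  apply: journeyS; first exact: all_ok_expand.
  case: vl Hl Ht Hs => [|x vl] //= _ /andP[Hx Ht] Hs.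
  by rewrite /jr /= eqxx; move: Hx; rewrite /vlt => -> /=; rewrite path_expand.
case: vl {Hl Ht Hs} => [|x vl] //= _; split=> //.
exact: last_expand.
Qed.

Lemma explored_expand vl x : x \in vl -> vlt x -> explored (expand vl) x.1.1.
Proof.
move=> /splitPr [vl1 vl2] Hx.
have E : expand (vl1 ++ x :: vl2) = expand vl1 ++ vin x :: vout x :: expand vl2.
  by rewrite /expand map_cat flatten_cat.
rewrite E; set s := (_ ++ _).
have H1 : size (expand vl1) < size s by rewrite size_cat /= addnS ltnS leq_addr.
have H2 : (size (expand vl1)).+1 < size s by rewrite size_cat /= !addnS !ltnS leq_addr.
apply/existsP; exists (Ordinal H1); apply/existsP; exists (Ordinal H2).
rewrite /= /s !nth_cat ltnn subnn /=.
have -> : (size (expand vl1)).+1 < size (expand vl1) = false by rewrite ltnNge leqnSn.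
rewrite subSnn /= !eqxx ltnSn /=; exact: Hx.
Qed.

Variable J : seq (tedge V).
Hypothesis HJ : exploration L J.

Lemma lab_lt m n : m < n -> n < size J -> tlab (nth t0 J m) < tlab (nth t0 J n).
Proof.
case: HJ => [[_ Hj] _].
elim: n => [|n IH] // Hmn Hn.
have [_ H] := Hj n Hn.
move: Hmn; rewrite ltnS leq_eqVlt => /orP[/eqP ->|Hmn]; first by [].
apply: ltn_trans (IH Hmn (ltnW Hn)) H.
Qed.

Definition visit k v a b :=
  [/\ k.+1 < size J, nth t0 J k = (None, Some v, a), nth t0 J k.+1 = (Some v, None, b),
      (a \in L v) && (b \in L v) & a < b].

Lemma entry_visit k v : k < size J -> ttgt (nth t0 J k) = Some v ->
  exists b, visit k v (tlab (nth t0 J k)) b.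
Proof.
case: HJ => [[Hok Hj] Hend] Hk Ht.
have Hokk : tedge_ok L (nth t0 J k) by apply: (allP Hok); rewrite mem_nth.
have Hk1 : k.+1 < size J.
  rewrite ltn_neqAle Hk andbT; apply/negP => /eqP Hsz.
  have Hne : J <> [::] by move=> E; rewrite E in Hk.
  case: (Hend Hne) => _; rewrite -nth_last -Hsz /= Ht //.
have [Ht2 Hl] := Hj k Hk1.
have Hok2 : tedge_ok L (nth t0 J k.+1) by apply: (allP Hok); rewrite mem_nth.
move: Ht Hokk Ht2 Hl Hok2.
case E1: (nth t0 J k) => [[s t] a]; case E2: (nth t0 J k.+1) => [[s' t'] b].
rewrite /ttgt /tsrc /tlab /= => Et; subst t.
case: s E1 => [s|] //= E1 Ha Es Hab; subst s'.
case: t' E2 => [t'|] //= E2 Hb.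
by exists b; split=> //; rewrite Ha Hb.
Qed.

Lemma explored_visit v : explored J v -> exists k a b, visit k v a b.
Proof.
move/existsP=> [i /existsP [j /and5P[_ _ /eqP Ht _ _]]].
have [b Hb] := entry_visit (ltn_ord i) Ht.
by exists i, (tlab (nth t0 J i)), b.
Qed.

Lemma visit_disj k v a b k' v' a' b' :
  visit k v a b -> visit k' v' a' b' -> v != v' -> b < a' \/ b' < a.
Proof.
move=> H H' Hvv.
wlog Hkk : k v a b k' v' a' b' H H' Hvv / k <= k'.
  move=> W; case: (leqP k k') => Hk; first exact: (W k v a b k' v' a' b' H H' Hvv Hk).
  have Hv' : v' != v by rewrite eq_sym.
  by case: (W k' v' a' b' k v a b H' H Hv' (ltnW Hk)); [right|left].
case: H H' => Hs1 E1 E2 _ _ [Hs2 E3 E4 _ _].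
left.
have Hne : k != k'.
  apply/negP=> /eqP Ek; subst k'.
  by move: E3; rewrite E1 => -[] /eqP; rewrite (negbTE Hvv).
have Hne2 : k.+1 != k'.
  apply/negP=> /eqP Ek; subst k'.
  by move: E3; rewrite E2.
have Hlt : k.+1 < k'.
  by rewrite ltn_neqAle Hne2 /=; rewrite ltn_neqAle Hne Hkk.
have := lab_lt Hlt (ltnW Hs2).
by rewrite E2 E3.
Qed.

Definition fe v := find (fun t => ttgt t == Some v) J.
Definition ent v := tlab (nth t0 J (fe v)).

Lemma explored_fe v : explored J v -> exists b, visit (fe v) v (ent v) b.
Proof.
move/existsP=> [i /existsP [j /and5P[_ _ /eqP Ht _ _]]].
have Hh : has (fun t => ttgt t == Some v) J.
  by apply/hasP; exists (nth t0 J i); [rewrite mem_nth|rewrite Ht].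
have Hf : fe v < size J by rewrite /fe -has_find.
have := nth_find t0 Hh => /eqP Hn.
exact: entry_visit Hf Hn.
Qed.

End Gen.


Section Form.
Variable p : nat.
Variable F : formula.
Local Notation q := (size F).
Local Notation V := (leafT p q).
Local Notation L := (star_labels (p:=p) (F:=F)).

Lemma clause_lab j l : l \in clause_labels F j -> exists i s, (i,s) \in nth [::] F j /\
  (if s then l \in [:: 50*i-12; 50*i-9; 50*i-8; 50*i-5] else l \in [:: 50*i+8; 50*i+11]).
Proof.
rewrite /clause_labels => /flatten_mapP [[i s] Hin Hl]; exists i, s; split=> //.
move: Hl; rewrite /lit_labels /=; case: s {Hin} => //.
by case: ifP => _; rewrite !inE => /orP[] ->; rewrite ?orbT.
Qed.

Lemma clause_lab_not j l i b : 1 <= i -> l \in clause_labels F j -> (i,b) \notin nth [::] F j ->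
  (if b then (l == 50*i+8) || (l == 50*i+11)
   else [|| l == 50*i-12, l == 50*i-9, l == 50*i-8 | l == 50*i-5])
  \/ l + 39 <= 50 * i \/ 50 * i + 38 <= l.
Proof.
move=> Hi /clause_lab [i' [s [Hin Hl]]] Hn.
case: (i' =P i) => [E|Ne].
  subst i'; have Hs : s = ~~ b.
    by case: s b Hin Hn {Hl} => -[] // ->.
  subst s; left; case: b Hn Hin Hl => /= _ _; rewrite !inE //.
right; case: s Hl {Hin Hn}; rewrite !inE; lia.
Qed.

Lemma window_contra J (HJ : exploration L J) (k : 'I_p) (jn jp : 'I_q) :
  explored J (e_ k) -> explored J (e'_ k) -> explored J (e''_ k) ->
  explored J (ec_ jn) -> (ent J (ec_ jn) + 12) %/ 50 = k.+1 -> (k.+1,true) \notin nth [::] F jn ->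
  explored J (ec_ jp) -> (ent J (ec_ jp) + 12) %/ 50 = k.+1 -> (k.+1,false) \notin nth [::] F jp ->
  (k.+1,true) \in nth [::] F jp -> False.
Proof.
move=> /(explored_visit HJ) [k1 [a1 [b1 V1]]].
move=> /(explored_visit HJ) [k2 [a2 [b2 V2]]].
move=> /(explored_visit HJ) [k3 [a3 [b3 V3]]].
move=> /(explored_fe HJ) [b4 V4] W4 N4.
move=> /(explored_fe HJ) [b5 V5] W5 N5 P5.
have Hjj : (ec_ jn : V) != ec_ jp.
  apply/negP => /eqP [] E; subst jn; by rewrite P5 in N4.
have D12 := visit_disj HJ V1 V2 isT.
have D13 := visit_disj HJ V1 V3 isT.
have D14 := visit_disj HJ V1 V4 isT.
have D15 := visit_disj HJ V1 V5 isT.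
have D23 := visit_disj HJ V2 V3 isT.
have D24 := visit_disj HJ V2 V4 isT.
have D25 := visit_disj HJ V2 V5 isT.
have D34 := visit_disj HJ V3 V4 isT.
have D35 := visit_disj HJ V3 V5 isT.
have D45 := visit_disj HJ V4 V5 Hjj.
case: V1 => _ _ _ /andP[L1 M1] O1.
case: V2 => _ _ _ /andP[L2 M2] O2.
case: V3 => _ _ _ /andP[L3 M3] O3.
case: V4 => _ _ _ /andP[L4 M4] O4.
case: V5 => _ _ _ /andP[L5 M5] O5.
move: L1 M1 L2 M2 L3 M3; rewrite /= !inE => L1 M1 L2 M2 L3 M3.
have Hi : 1 <= k.+1 by [].
have C4 := clause_lab_not Hi L4 N4.
have C4' := clause_lab_not Hi M4 N4.
have C5 := clause_lab_not Hi L5 N5.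
have C5' := clause_lab_not Hi M5 N5.
move: C4 C4' C5 C5' => /= C4 C4' C5 C5'.
set i := k.+1 in W4 W5 L1 M1 L2 M2 L3 M3 C4 C4' C5 C5' Hi.
set A4 := ent J (ec_ jn) in W4 O4 D14 D24 D34 D45 C4.
set A5 := ent J (ec_ jp) in W5 O5 D15 D25 D35 D45 C5.
clearbody i A4 A5.
have [E2 F2] : a2 = 50 * i /\ b2 = 50 * i + 1 by clear -L2 M2 O2; lia.
have [E3 F3] : a3 = 50 * i + 15 /\ b3 = 50 * i + 16 by clear -L3 M3 O3; lia.
subst a2 b2 a3 b3.
have [E4 F4] : A4 = 50 * i + 8 /\ b4 = 50 * i + 11 by clear -Hi C4 C4' W4 D34 O4; lia.
subst A4 b4.
have [E1 F1] : a1 = 50 * i - 10 /\ b1 = 50 * i - 7 by clear -Hi L1 M1 O1 D12 D14; lia.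
subst a1 b1.
clear -Hi C5 C5' W5 O5 D15 D25; lia.
Qed.

End Form.


Section Count.
Variable p : nat.
Variable F : formula.
Local Notation q := (size F).
Local Notation V := (leafT p q).
Local Notation L := (star_labels (p:=p) (F:=F)).

Lemma sum_count (P : pred clause) :
  \sum_(j < size F) P (nth [::] F j) = count P F.
Proof.
rewrite -sum1_count (big_nth [::]) big_mkcond /= big_mkord.
rewrite [RHS]big_mkcond /=; apply: eq_bigr => j _; by case: (P _).
Qed.

Lemma expl_sizeE (s : seq (tedge V)) : expl_size s =
  \sum_(k < p) explored s (e_ k) + \sum_(k < p) explored s (e'_ k)
  + \sum_(k < p) explored s (e''_ k) + \sum_(j < q) explored s (ec_ j).
Proof.
rewrite /expl_size -sum1_card big_mkcond /=.
rewrite !big_sumType /=.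
by congr (_ + _ + _ + _); apply: eq_bigr => i _; rewrite inE.
Qed.

Lemma sum_pos n (f : 'I_n -> bool) : 0 < \sum_(j < n) f j -> exists j, f j.
Proof.
case: (boolP [exists j, f j]) => [/existsP [j Hj] _|/existsPn H]; first by exists j.
by rewrite big1 // => j _; rewrite (negbTE (H j)).
Qed.

Hypothesis Hwf : wf_3sat3 p F.
Variable J : seq (tedge V).
Hypothesis HJ : exploration L J.

Definition mk (k : 'I_p) : nat :=
  (~~ explored J (e_ k)) + (~~ explored J (e'_ k)) + (~~ explored J (e''_ k)).
Definition win (j : 'I_q) := (ent J (ec_ j : V) + 12) %/ 50.
Definition Dt (k : 'I_p) (b : bool) (j : 'I_q) : bool :=
  [&& explored J (ec_ j), win j == k.+1, (k.+1, ~~ b) \in nth [::] F j &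
      (k.+1, b) \notin nth [::] F j].
Definition D k b := \sum_(j < q) Dt k b j.
Definition sigma k := D k true <= mk k.
Definition sat (s : 'I_p -> bool) (j : 'I_q) :=
  [exists k : 'I_p, (k.+1, s k) \in nth [::] F j].

Lemma nneg1 (k : 'I_p) : nneg F k.+1 <= 1.
Proof.
case: Hwf => _ H.
have /H [H1 H2 H3 H4 H5] : 1 <= k.+1 <= p by rewrite /= ltn_ord.
case E: (npos F k.+1 + nneg F k.+1 == 3); first by case: (H4 (eqP E)) => ->.
case E2: (npos F k.+1 + nneg F k.+1 == 2); first by case: (H5 (eqP E2)) => ->.
move/eqP: E; move/eqP: E2 => E E2; lia.
Qed.

Lemma D_le k : D k (sigma k) <= mk k.
Proof.
case Hs: (sigma k); first by [].
move: Hs; rewrite /sigma => /negbT; rewrite -ltnNge => Hlt.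
have HD1 : D k true <= 1.
  apply: leq_trans (nneg1 k); rewrite /nneg -sum_count /D.
  apply: leq_sum => j _; rewrite /Dt /=.
  by case: ((k.+1, false) \in _); rewrite /= ?andbF ?andFb ?leq_b1.
have Hm0 : mk k = 0.
  by apply/eqP; rewrite -leqn0 -ltnS; exact: leq_trans Hlt HD1.
have [jn Hjn] : exists j, Dt k true j by apply: sum_pos; move: Hlt; rewrite Hm0.
rewrite Hm0 leqn0; apply: contraT; rewrite -lt0n => /sum_pos [jp Hjp].
move: Hm0; rewrite /mk.
case E1: (explored J (e_ k)); case E2: (explored J (e'_ k));
  case E3: (explored J (e''_ k)) => //= _.
case/and4P: Hjn => X1 /eqP W1 _ N1.
case/and4P: Hjp => X2 /eqP W2 P2 N2.
case: (window_contra HJ E1 E2 E3 X1 W1 N1 X2 W2 N2 P2).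
Qed.

Lemma clause_bound (s : 'I_p -> bool) (j : 'I_q) :
  explored J (ec_ j) <= sat s j + \sum_(k < p) Dt k (s k) j.
Proof.
case Hx: (explored J (ec_ j)) => //.
case Hs: (sat s j) => //.
have [b [_ _ _ /andP[Hl _] _]] := explored_fe HJ Hx.
move: Hl => /= /clause_lab [i' [t [Hin Hlab]]].
have Hi' : 1 <= i' <= p.
  case: Hwf => /(_ (nth [::] F j)) H _.
  have := H (mem_nth _ (ltn_ord j)) => -[_ _ /allP /(_ _ Hin)] //.
have Hk : i'.-1 < p by lia.
set k := Ordinal Hk.
have Ek : k.+1 = i' by rewrite /= ; lia.
have Hw : win j = i'.
  rewrite /win; move: Hlab; case: t {Hin}; rewrite !inE; lia.
have Hn : (k.+1, s k) \notin nth [::] F j.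
  apply/negP => H; suff : sat s j by rewrite Hs.
  by apply/existsP; exists k.
have Ht : t = ~~ s k.
  by move: Hn; rewrite Ek; case: t Hin {Hlab}; case: (s k) => // ->.
rewrite (bigD1 k) //=.
suff -> : Dt k (s k) j by [].
by rewrite /Dt Hx Hw Ek eqxx /= -Ht Hin -Ek Hn.
Qed.

End Count.


Section SB.
Variable p : nat.
Variable F : formula.
Local Notation q := (size F).
Local Notation V := (leafT p q).
Local Notation L := (star_labels (p:=p) (F:=F)).
Hypothesis Hwf : wf_3sat3 p F.
Variable J : seq (tedge V).
Hypothesis HJ : exploration L J.

Lemma test : \sum_(j < q) explored J (ec_ j) <=
     \sum_(j < q) (sat (sigma J) j + \sum_(k < p) Dt J k (sigma J k) j).
Proof.
apply: leq_sum => j _.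
exact: (clause_bound Hwf HJ (sigma J) j).
Qed.

Lemma size_bound : expl_size J <= 3 * p + \sum_(j < q) sat (sigma J) j.
Proof.
rewrite expl_sizeE.
have H1 : \sum_(j < q) explored J (ec_ j) <= \sum_(j < q) sat (sigma J) j + \sum_(k < p) mk J k.
  apply: leq_trans (test) _.
  rewrite big_split /=.
  rewrite leq_add2l.
  rewrite exchange_big /=.
  apply: leq_sum => k _; exact: D_le.
have H2 : \sum_(k < p) explored J (e_ k) + \sum_(k < p) explored J (e'_ k)
  + \sum_(k < p) explored J (e''_ k) + \sum_(k < p) mk J k = 3 * p.
  rewrite -!big_split /=.
  rewrite (eq_bigr (fun _ => 3)).
    by rewrite sum_nat_const card_ord mulnC.
  move=> k _; rewrite /mk.
  by case: (explored J (e_ k)); case: (explored J (e'_ k)); case: (explored J (e''_ k)).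
have aux : forall a b c d e f : nat, d <= e + f -> a + b + c + f = 3 * p ->
  a + b + c + d <= 3 * p + e.
  move=> a b c d e f; lia.
exact: aux H1 H2.
Qed.
End SB.


Section Canon.
Variable p : nat.
Variable F : formula.
Local Notation q := (size F).
Local Notation V := (leafT p q).
Local Notation L := (star_labels (p:=p) (F:=F)).
Hypothesis Hwf : wf_3sat3 p F.

Definition posO i := [seq j : 'I_q <- enum 'I_q | (i, true) \in nth [::] F j].
Definition negO i := [seq j : 'I_q <- enum 'I_q | (i, false) \in nth [::] F j].
Definition lab1 i (j : nat) : nat * nat :=
  if first_pos F i == j then (50*i-12, 50*i-9) else (50*i-8, 50*i-5).

Definition blockT (k : 'I_p) : seq (vis V) :=
  [seq ((ec_ j : V), (lab1 k.+1 j).1, (lab1 k.+1 j).2) | j <- posO k.+1] ++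
  [:: (e'_ k, 50*k.+1, 50*k.+1+1); (e_ k, 50*k.+1+10, 50*k.+1+13);
      (e''_ k, 50*k.+1+15, 50*k.+1+16)].
Definition blockF (k : 'I_p) : seq (vis V) :=
  [:: (e_ k, 50*k.+1-10, 50*k.+1-7); (e'_ k, 50*k.+1, 50*k.+1+1)] ++
  [seq ((ec_ j : V), 50*k.+1+8, 50*k.+1+11) | j <- negO k.+1] ++
  [:: (e''_ k, 50*k.+1+15, 50*k.+1+16)].
Definition block k (b : bool) := if b then blockT k else blockF k.
Definition canonV (s : 'I_p -> bool) := flatten [seq block k (s k) | k <- enum 'I_p].

Lemma count_enum_nth (P : pred clause) :
  count (fun j : 'I_q => P (nth [::] F j)) (enum 'I_q) = count P F.
Proof.
have E : [seq nth [::] F j | j : 'I_q <- enum 'I_q] = F.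
  by rewrite -[RHS](mkseq_nth [::]) /mkseq -val_enum_ord -map_comp.
have -> : count P F = count P [seq nth [::] F j | j : 'I_q <- enum 'I_q] by rewrite E.
by rewrite [RHS]count_map.
Qed.

Lemma pw_enum : pairwise (fun a b : 'I_q => val a < val b) (enum 'I_q).
Proof.
rewrite -(pairwise_map val (fun a b => a < b)) val_enum_ord.
rewrite -(sorted_pairwise ltn_trans); exact: iota_ltn_sorted.
Qed.

Lemma npos_bounds (k : 'I_p) : 1 <= npos F k.+1 <= 2 /\ nneg F k.+1 = 1.
Proof.
case: Hwf => _ H.
have /H [H1 H2 H3 H4 H5] : 1 <= k.+1 <= p by rewrite /= ltn_ord.
move: H1 H2 H3 H4 H5.
set a := npos F k.+1; set b := nneg F k.+1; clearbody a b => H1 H2 H3 H4 H5.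
case E: (a + b == 3); first by case: (H4 (eqP E)) => -> ->.
case E2: (a + b == 2); first by case: (H5 (eqP E2)) => -> ->.
move/eqP: E; move/eqP: E2 => E E2; lia.
Qed.

Lemma mem_cl j i b l : (i, b) \in nth [::] F j -> l \in lit_labels F j (i, b) ->
  l \in clause_labels F j.
Proof. by move=> H1 H2; apply/flatten_mapP; exists (i, b). Qed.

Lemma posO_shape (k : 'I_p) :
  (exists j1, posO k.+1 = [:: j1] /\ first_pos F k.+1 = j1) \/
  (exists j1 j2, posO k.+1 = [:: j1; j2] /\ first_pos F k.+1 = j1 /\ first_pos F k.+1 != j2).
Proof.
have [/andP[H1 H2] _] := npos_bounds k.
have Hsz : size (posO k.+1) = npos F k.+1 by rewrite size_filter; exact: (count_enum_nth (fun c : clause => (k.+1, true) \in c)).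
have Hpw : pairwise (fun a b : 'I_q => val a < val b) (posO k.+1)
  by apply: pairwise_filter; exact: pw_enum.
have Hmin : forall j, j \in posO k.+1 -> first_pos F k.+1 <= j.
  move=> j; rewrite mem_filter => /andP[Hj _]; rewrite leqNgt; apply/negP => Hlt.
  by have := before_find [::] Hlt; rewrite Hj.
have Hhas : has (fun c : clause => (k.+1, true) \in c) F by rewrite has_count.
have Hf : first_pos F k.+1 < q by rewrite /first_pos -has_find.
have Hfm : Ordinal Hf \in posO k.+1.
  by rewrite mem_filter mem_enum andbT /=; exact: (nth_find [::] Hhas).
move: Hsz Hpw Hmin Hfm; case: (posO k.+1) => [|j1 [|j2 [|j3 s]]] //= Hsz.
- move=> _ _; rewrite inE => /eqP E; left; exists j1; split => //; by rewrite -E.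
- rewrite !andbT => Hlt Hmin; rewrite !inE => /orP[] /eqP E.
    subst j1; right; exists (Ordinal Hf), j2; split=> //; split=> //.
    by rewrite neq_ltn; apply/orP; left; exact: Hlt.
  have := Hmin j1; rewrite inE eqxx => /(_ isT) => Hle.
  have Ev : first_pos F k.+1 = j2 by rewrite -E.
  by move: (leq_ltn_trans Hle Hlt); rewrite Ev ltnn.
- by move: H2; rewrite -Hsz.
Qed.

Lemma negO_shape (k : 'I_p) : exists j, negO k.+1 = [:: j] /\ (k.+1, false) \in nth [::] F j.
Proof.
have [_ H1] := npos_bounds k.
have Hsz : size (negO k.+1) = 1 by rewrite size_filter -H1; exact: (count_enum_nth (fun c : clause => (k.+1, false) \in c)).
have Hall : forall j, j \in negO k.+1 -> (k.+1, false) \in nth [::] F j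
  by move=> j; rewrite mem_filter => /andP[].
move: Hsz Hall; case: (negO k.+1) => [|j [|j2 s]] //= _ H.
by exists j; split=> //; apply: H; rewrite inE.
Qed.

Definition inwin (k : 'I_p) (x : vis V) := (50*k.+1 - 12 <= x.1.2) && (x.2 <= 50*k.+1+16).

Lemma block_ok k b :
  [/\ all (vlab L) (block k b), all (@vlt V) (block k b),
      all (inwin k) (block k b) & pairwise (@vr V) (block k b)].
Proof.
case: b; rewrite /block.
- have Hc : forall j, j \in posO k.+1 ->
    ((lab1 k.+1 j).1 \in L (ec_ j)) && ((lab1 k.+1 j).2 \in L (ec_ j)).
    move=> j; rewrite mem_filter => /andP[Hj _] /=.
    by rewrite !(mem_cl Hj) // /lit_labels /= /lab1; case: ifP => _; rewrite !inE eqxx ?orbT.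
  have Hl : forall j, ((lab1 k.+1 j).1 < (lab1 k.+1 j).2) &&
      (50*k.+1 - 12 <= (lab1 k.+1 j).1) && ((lab1 k.+1 j).2 <= 50*k.+1+16).
    by move=> j; rewrite /lab1; case: ifP => _ /=; lia.
  split.
  + rewrite all_cat; apply/andP; split.
      by apply/allP => x /mapP [j Hj ->]; exact: Hc.
    by rewrite /= /vlab /= !inE !eqxx ?orbT.
  + rewrite all_cat; apply/andP; split.
      by apply/allP => x /mapP [j Hj ->]; have /andP[/andP[]] := Hl j.
    rewrite /= /vlt /=; lia.
  + rewrite all_cat; apply/andP; split.
      apply/allP => x /mapP [j Hj ->]; have /andP[/andP[_ A] B] := Hl j.
      by rewrite /inwin /= A B.
    rewrite /= /inwin /=; lia.
  + rewrite /blockT; case: (posO_shape k) => [[j1 [-> E]]|[j1 [j2 [-> [E1 E2]]]]].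
      by rewrite /= /vr /lab1 /= E eqxx /=; lia.
    by rewrite /= /vr /lab1 /= (negbTE E2) E1 eqxx /=; lia.
- have [jn [En Hn]] := negO_shape k.
  rewrite /blockF En; split.
  + rewrite /= /vlab /= !inE !eqxx ?orbT /=.
    by rewrite !(mem_cl Hn) // /lit_labels /= !inE eqxx ?orbT.
  + rewrite /= /vlt /=; lia.
  + rewrite /= /inwin /=; lia.
  + rewrite /= /vr /=; lia.
Qed.

End Canon.


Section Main.
Variable p : nat.
Variable F : formula.
Local Notation q := (size F).
Local Notation V := (leafT p q).
Local Notation L := (star_labels (p:=p) (F:=F)).
Hypothesis Hwf : wf_3sat3 p F.

Lemma pw_enum_gen n : pairwise (fun a b : 'I_n => val a < val b) (enum 'I_n).
Proof.
rewrite -(pairwise_map val (fun a b => a < b)) val_enum_ord.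
rewrite -(sorted_pairwise ltn_trans); exact: iota_ltn_sorted.
Qed.

Lemma canon_pw (s : seq 'I_p) (sg : 'I_p -> bool) :
  pairwise (fun a b : 'I_p => val a < val b) s ->
  pairwise (@vr V) (flatten [seq block F k (sg k) | k <- s]).
Proof.
elim: s => [|k s IH] //= /andP[Hall Hpw].
rewrite pairwise_cat IH // andbT.
have [_ _ Hw Hp] := block_ok Hwf k (sg k).
rewrite Hp andbT.
apply/allrelP => x y Hx /flatten_mapP [k' Hk' Hy].
have /andP[_ Hx2] := allP Hw x Hx.
have [_ _ Hw' _] := block_ok Hwf k' (sg k').
have /andP[Hy1 _] := allP Hw' y Hy.
have Hkk := allP Hall k' Hk'.
rewrite /vr; move: Hx2 Hy1 Hkk => /=; lia.
Qed.

Lemma canon_all (sg : 'I_p -> bool) :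
  all (vlab L) (canonV F sg) /\ all (@vlt V) (canonV F sg).
Proof.
split; apply/allP => x /flatten_mapP [k _ Hx].
  by have [H _ _ _] := block_ok Hwf k (sg k); exact: (allP H).
by have [_ H _ _] := block_ok Hwf k (sg k); exact: (allP H).
Qed.

Lemma canon_expl (sg : 'I_p -> bool) : exploration L (expand (canonV F sg)).
Proof.
have [H1 H2] := canon_all sg.
apply: expand_expl => //.
apply: pairwise_sorted; apply: canon_pw; exact: pw_enum_gen.
Qed.

Lemma canon_e (sg : 'I_p -> bool) (k : 'I_p) :
  [&& explored (expand (canonV F sg)) (e_ k), explored (expand (canonV F sg)) (e'_ k)
    & explored (expand (canonV F sg)) (e''_ k)].
Proof.
have [_ H2] := canon_all sg.
have Hin : forall x, x \in block F k (sg k) -> x \in canonV F sg.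
  by move=> x Hx; apply/flatten_mapP; exists k; rewrite ?mem_enum.
have E : forall x, x \in block F k (sg k) -> explored (expand (canonV F sg)) x.1.1.
  move=> x Hx; apply: explored_expand; first exact: Hin.
  exact: (allP H2 x (Hin x Hx)).
rewrite /block; case: (sg k) in E *.
  apply/and3P; split.
  - apply: (E (e_ k, 50*k.+1+10, 50*k.+1+13)).
    by rewrite /blockT mem_cat !inE eqxx ?orbT.
  - apply: (E (e'_ k, 50*k.+1, 50*k.+1+1)).
    by rewrite /blockT mem_cat !inE eqxx ?orbT.
  - apply: (E (e''_ k, 50*k.+1+15, 50*k.+1+16)).
    by rewrite /blockT mem_cat !inE eqxx ?orbT.
apply/and3P; split.
- apply: (E (e_ k, 50*k.+1-10, 50*k.+1-7)).
  by rewrite /blockF !mem_cat !inE eqxx ?orbT.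
- apply: (E (e'_ k, 50*k.+1, 50*k.+1+1)).
  by rewrite /blockF !mem_cat !inE eqxx ?orbT.
- apply: (E (e''_ k, 50*k.+1+15, 50*k.+1+16)).
  by rewrite /blockF !mem_cat !inE eqxx ?orbT.
Qed.

Lemma canon_sat (sg : 'I_p -> bool) (j : 'I_q) : sat sg j -> explored (expand (canonV F sg)) (ec_ j).
Proof.
move=> /existsP [k Hk].
have [_ H2] := canon_all sg.
have Hin : forall x, x \in block F k (sg k) -> x \in canonV F sg.
  by move=> x Hx; apply/flatten_mapP; exists k; rewrite ?mem_enum.
have E : forall x, x \in block F k (sg k) -> explored (expand (canonV F sg)) x.1.1.
  move=> x Hx; apply: explored_expand; first exact: Hin.
  exact: (allP H2 x (Hin x Hx)).
rewrite /block; move: Hk; case: (sg k) in E * => Hk.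
  apply: (E (ec_ j, (lab1 F k.+1 j).1, (lab1 F k.+1 j).2)).
  rewrite /blockT mem_cat; apply/orP; left.
  by apply/mapP; exists j => //; rewrite mem_filter mem_enum Hk.
apply: (E (ec_ j, 50*k.+1+8, 50*k.+1+11)).
rewrite /blockF !mem_cat; apply/orP; right; apply/orP; left.
by apply/mapP; exists j => //; rewrite mem_filter mem_enum Hk.
Qed.

Lemma canon_size (sg : 'I_p -> bool) : 3 * p + \sum_(j < q) sat sg j <= expl_size (expand (canonV F sg)).
Proof.
rewrite expl_sizeE.
have Hp : forall f : 'I_p -> bool, (forall k, f k) -> \sum_(k < p) f k = p.
  move=> f Hf; rewrite (eq_bigr (fun _ => 1)); first by rewrite sum_nat_const card_ord muln1.
  by move=> k _; rewrite Hf.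
have aux : forall a b c d e : nat, a = p -> b = p -> c = p -> e <= d -> 3*p + e <= a + b + c + d.
  move=> a b c d e -> -> -> H; lia.
apply: aux.
- by apply: Hp => k; case/and3P: (canon_e sg k).
- by apply: Hp => k; case/and3P: (canon_e sg k).
- by apply: Hp => k; case/and3P: (canon_e sg k).
apply: leq_sum => j _.
by case Hs: (sat sg j) => //=; rewrite canon_sat.
Qed.

End Main.

Lemma max_gen (P : nat -> Prop) N : (exists n, P n) -> (forall n, P n -> n <= N) ->
  exists n, P n /\ forall m, P m -> m <= n.
Proof.
elim: N => [|N IH] [n Hn] Hb.
  exists n; split=> // m Hm; have := Hb m Hm; have := Hb n Hn; lia.
case: (classic (P N.+1)) => H.
  by exists N.+1; split.
apply: IH; first by exists n.
move=> m Hm; have := Hb m Hm; rewrite leq_eqVlt => /orP[/eqP E|//].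
by subst m.
Qed.

Lemma max_exists (V : finType) (L : V -> seq nat) : exists J, max_exploration L J.
Proof.
have H0 : exploration L [::].
  split; last by [].
  by split=> // k.
have Hb : forall n, (exists J, exploration L J /\ expl_size J = n) -> n <= #|V|.
  by move=> n [J [_ <-]]; exact: max_card.
have [n [[J [HJ E]] Hm]] := @max_gen (fun n => exists J, exploration L J /\ expl_size J = n) #|V|
  (ex_intro _ _ (ex_intro _ [::] (conj H0 erefl))) Hb.
exists J; split=> // s Hs; rewrite E; apply: Hm; by exists s.
Qed.

Theorem lemma1 (p : nat) (F : formula) :
  wf_3sat3 p F ->
  exists J : seq (tedge (leafT p (size F))),
    max_exploration (star_labels (p:=p) (F:=F)) J /\
    forall k : 'I_p,
      [&& explored J (e_ k), explored J (e'_ k) & explored J (e''_ k)].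
Proof.
move=> Hwf.
have [J0 [HJ0 Hmax]] := max_exists (star_labels (p:=p) (F:=F)).
exists (expand (canonV F (sigma J0))); split.
  split; first exact: canon_expl.
  move=> s' Hs'; apply: leq_trans (Hmax s' Hs') _.
  apply: leq_trans (size_bound Hwf HJ0) _.
  exact: canon_size.
move=> k; exact: canon_e.
Qed.
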